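(* Let $n\ge2$ and $P=(a_1,\dots,a_{n-1},0)$ with $0<a_i<\tfrac12$ for all $i\le n-1$. Then the vertices of $\mathcal R(P)$ are exactly the following points. (1) Standard vertices: for each labeled set $S\subset[\![n-1]\!]$ with $0\le K(S)\le1$, the points $v_S^\pm$ with coordinates $x_i=a_i-\tfrac12+\varepsilon_i$ for $i\in S$, $x_i=\tfrac12-a_i$ for $i\in\widetilde S$, and $x_n=\pm K(S)$ (if $K(S)=0$ then $v_S^+=v_S^-$). (2) Middle vertices: for each labeled set $S$ and $k\in S$ with $K(S)<0<K(S\setminus\{k\})$, the point $v^0_{S,k}$ with $x_i=a_i-\tfrac12+\varepsilon_i$ for $i\in S\setminus\{k\}$, $x_i=\tfrac12-a_i$ for $i\in\widetilde S$, $x_k=a_k-\tfrac12+\varepsilon_k-\frac{K(S)}{2a_k-\varepsilon_k}$, and $x_n=0$. (3) Truncating vertices: for each labeled set $S$ and $k\notin S$ together with a label $\varepsilon_k\in\{0,1\}$ such that $K(S\cup\{k\})<1<K(S)$, the points $v^\pm_{S,k}$ with $x_i=a_i-\tfrac12+\varepsilon_i$ for $i\in S$, $x_i=\tfrac12-a_i$ for $i\in\widetilde S\setminus\{k\}$, $x_k=a_k-\tfrac12+\varepsilon_k+\frac{1-K(S\cup\{k\})}{2a_k-\varepsilon_k}$, and $x_n=\pm1$. There are no other vertices of $\mathcal R(P)$.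
   Context: For $P=(a_1,\dots,a_{n-1},0)$ with $0<a_i<\tfrac12$, $\mathcal R(P)\subset\mathbb R^n$ is the polytope defined by the inequalities: $a_i-\tfrac12\le x_i\le a_i+\tfrac12$ for $1\le i\le n-1$; $-1\le x_n\le 1$; and for every $\delta=(\delta_1,\dots,\delta_{n-1})\in\{0,1\}^{n-1}$, $x_n\le\tfrac12+\sum_{i=1}^{n-1}(2a_i-\delta_i)(x_i-\tfrac12\delta_i)$ and $x_n\ge-\tfrac12-\sum_{i=1}^{n-1}(2a_i-\delta_i)(x_i-\tfrac12\delta_i)$. (This is the set of points $Q$ at least as close to $P$ as to any point of the $\sim$-orbit ''neighbours'' of $P$, where $\sim$ on $\mathbb R^n$ is generated by $x\sim x+e_i$, $i\le n-1$, and $(x_1,\dots,x_n)\sim(1-x_1,\dots,1-x_{n-1},x_n+1)$.) Write $[\![n-1]\!]=\{1,\dots,n-1\}$. A labeled set is a subset $S\subset[\![n-1]\!]$ together with a function $S\to\{0,1\}$, $i\mapsto\varepsilon_i$. For $0<a\le\tfrac12$ put $\Delta_a=a-2a^2=\tfrac18-2(a-\tfrac14)^2$; $\Delta(S)=\sum_{i\in S}\Delta_{a_i}$; $\widetilde S=[\![n-1]\!]\setminus S$; and $K(S)=\tfrac12-\Delta(S)+\Delta(\widetilde S)$ (depending only on the underlying set of $S$). *)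

(* Defs.v *)
(* the statement is purely order/field-theoretic, stated over
   an arbitrary real field R (this includes the real numbers). *)
From HB Require Import structures.
From mathcomp Require Import all_boot all_order all_algebra.
Set Implicit Arguments. Unset Strict Implicit. Unset Printing Implicit Defensive.
Import Order.TTheory GRing.Theory Num.Theory.
Local Open Scope ring_scope.

(* Throughout, n = m + 1.  Points of R^n are row vectors 'rV[R]_(m + 1);
   coordinate i in [[n-1]] (0-based index i : 'I_m) is  x 0 (lshift 1 i),
   and the last coordinate x_n is  x 0 (rshift m ord0).
   a : 'I_m -> R gives P = (a_1, ..., a_{n-1}, 0). *)

Definition xi (R : ringType) (m : nat) (x : 'rV[R]_(m + 1)) (i : 'I_m) : R :=
  x 0 (lshift 1 i).
Definition xn (R : ringType) (m : nat) (x : 'rV[R]_(m + 1)) : R :=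
  x 0 (rshift m (@ord0 0)).

Definition RP (R : realFieldType) (m : nat) (a : 'I_m -> R) (x : 'rV[R]_(m + 1)) : Prop :=
  (forall i : 'I_m, a i - 2^-1 <= xi x i <= a i + 2^-1) /\
  (-1 <= xn x <= 1) /\
  (forall delta : 'I_m -> bool,
     xn x <= 2^-1 + \sum_(i < m) (2 * a i - (delta i)%:R) * (xi x i - 2^-1 * (delta i)%:R)
     /\ - 2^-1 - \sum_(i < m) (2 * a i - (delta i)%:R) * (xi x i - 2^-1 * (delta i)%:R) <= xn x).

Definition is_vertex (R : realFieldType) (k : nat) (C : 'rV[R]_k -> Prop) (x : 'rV[R]_k) : Prop :=
  C x /\ forall (y z : 'rV[R]_k) (t : R), C y -> C z -> 0 < t < 1 ->
    x = t *: y + (1 - t) *: z -> y = z.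

Definition Delta_ (R : realFieldType) (t : R) : R := t - 2 * t ^+ 2.
Definition DeltaS (R : realFieldType) (m : nat) (a : 'I_m -> R) (S : {set 'I_m}) : R :=
  \sum_(i in S) Delta_ (a i).
Definition KS (R : realFieldType) (m : nat) (a : 'I_m -> R) (S : {set 'I_m}) : R :=
  2^-1 - DeltaS a S + DeltaS a (~: S).

Definition mkpt (R : ringType) (m : nat) (f : 'I_m -> R) (z : R) : 'rV[R]_(m + 1) :=
  row_mx (\row_(i < m) f i) (z%:M).

Definition base (R : realFieldType) (m : nat) (a : 'I_m -> R) (S : {set 'I_m})
  (eps : 'I_m -> bool) (i : 'I_m) : R :=
  if i \in S then a i - 2^-1 + (eps i)%:R else 2^-1 - a i.

Definition standard_vertex (R : realFieldType) (m : nat) (a : 'I_m -> R) (x : 'rV[R]_(m + 1)) : Prop :=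
  exists (S : {set 'I_m}) (eps : 'I_m -> bool) (s : bool),
    0 <= KS a S <= 1 /\ x = mkpt (base a S eps) ((-1) ^+ s * KS a S).

Definition middle_vertex (R : realFieldType) (m : nat) (a : 'I_m -> R) (x : 'rV[R]_(m + 1)) : Prop :=
  exists (S : {set 'I_m}) (eps : 'I_m -> bool) (k : 'I_m),
    k \in S /\ KS a S < 0 < KS a (S :\ k) /\
    x = mkpt (fun i => if i == k
                       then a k - 2^-1 + (eps k)%:R - KS a S / (2 * a k - (eps k)%:R)
                       else base a S eps i) 0.

Definition truncating_vertex (R : realFieldType) (m : nat) (a : 'I_m -> R) (x : 'rV[R]_(m + 1)) : Prop :=
  exists (S : {set 'I_m}) (eps : 'I_m -> bool) (k : 'I_m) (s : bool),
    k \notin S /\ KS a (k |: S) < 1 < KS a S /\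
    x = mkpt (fun i => if i == k
                       then a k - 2^-1 + (eps k)%:R + (1 - KS a (k |: S)) / (2 * a k - (eps k)%:R)
                       else base a S eps i) ((-1) ^+ s).

(* Main.v *)
Require Import Defs.
From HB Require Import structures.
From mathcomp Require Import all_boot all_order all_algebra.
From mathcomp Require Import ring lra.
Import Order.TTheory GRing.Theory Num.Theory.
Set Implicit Arguments. Unset Strict Implicit. Unset Printing Implicit Defensive.
Local Open Scope ring_scope.

Lemma min_pos (R : realFieldType) (p q : R) : 0 < p -> 0 < q -> exists2 u : R, 0 < u & u <= p /\ u <= q.
Proof.
move=> hp hq; case: (lerP p q) => h.
- by exists p => //; split.
- by exists q => //; split; [apply: ltW|].
Qed.

Lemma comb_le (R : realFieldType) (p q c t : R) : p <= c -> q <= c -> 0 < t < 1 ->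
  c = t * p + (1 - t) * q -> p = c.
Proof.
move=> hp hq /andP[t0 t1] e; apply/eqP; rewrite eq_le hp /= leNgt; apply/negP => hlt.
have : 0 < t * (c - p) by apply: mulr_gt0; lra.
have : 0 <= (1 - t) * (c - q) by apply: mulr_ge0; lra.
nra.
Qed.

Lemma sgn2 (R : realFieldType) (s : bool) : (-1) ^+ s * (-1) ^+ s = 1 :> R.
Proof. by case: s; rewrite /= ?expr1 ?expr0 ?mulr1 // mulrNN mulr1. Qed.

Section Poly.
Variable R : realFieldType.
Variable m : nat.
Variable a : 'I_m -> R.
Hypothesis ha : forall i, 0 < a i < 2^-1.

Definition fd (i : 'I_m) (d : bool) (t : R) : R := (2 * a i - d%:R) * (t - 2^-1 * d%:R).
Definition gg i t := if fd i false t <= fd i true t then fd i false t else fd i true t.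
Definition sel i (t : R) := 2^-1 - a i < t.
Definition Fd (d : 'I_m -> bool) (h : 'I_m -> R) := \sum_(i < m) fd i (d i) (h i).
Definition Gf (h : 'I_m -> R) := \sum_(i < m) gg i (h i).
Definition Dl i := Delta_ (a i).

Lemma fd0 i t : fd i false t = 2 * a i * t.
Proof. by rewrite /fd /= subr0 mulr0 subr0. Qed.
Lemma fd1 i t : fd i true t = (2 * a i - 1) * (t - 2^-1).
Proof. by rewrite /fd /= mulr1. Qed.
Lemma fd_diff i t : fd i false t - fd i true t = t + a i - 2^-1.
Proof. by rewrite fd0 fd1; field. Qed.
Lemma fd_lin i d t v : fd i d (t + v) = fd i d t + (2 * a i - d%:R) * v.
Proof. rewrite /fd; ring. Qed.
Lemma fd_aff i d t p q : fd i d (t * p + (1 - t) * q) = t * fd i d p + (1 - t) * fd i d q.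
Proof. rewrite /fd; ring. Qed.

Lemma sig_ne0 i (d : bool) : 2 * a i - d%:R != 0.
Proof. have := ha i; case/andP=> h1 h2; case: d => /=; apply/eqP; lra. Qed.
Lemma sig_abs i (d : bool) (u : R) : `|(2 * a i - d%:R) * u| <= `|u|.
Proof.
rewrite normrM; apply: ler_piMl => //.
have := ha i; case/andP=> h1 h2; rewrite ler_norml; case: d => /=; apply/andP; split; lra.
Qed.

Lemma gg_le i d t : gg i t <= fd i d t.
Proof. rewrite /gg; case: ifP => h; case: d => //; rewrite ?h //; move/negbT: h; rewrite -ltNge => h; exact: ltW. Qed.

Lemma gg_piece0 i t : t <= 2^-1 - a i -> gg i t = fd i false t.
Proof. move=> ht; rewrite /gg ifT //; rewrite -subr_le0 fd_diff; lra. Qed.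
Lemma gg_piece1 i t : 2^-1 - a i <= t -> gg i t = fd i true t.
Proof.
move=> ht; rewrite /gg; case: ifP => // h; apply/eqP; rewrite eq_le h /=.
by rewrite -subr_ge0 fd_diff; lra.
Qed.
Lemma gg_sel i t : gg i t = fd i (sel i t) t.
Proof.
rewrite /sel; case: ltP => h; [exact: gg_piece1 (ltW h) | exact: gg_piece0].
Qed.

Lemma gg_lip i t u : gg i t - `|u| <= gg i (t + u).
Proof.
have key : forall d, gg i t - `|u| <= fd i d (t + u).
  move=> d; rewrite fd_lin; have := gg_le i d t; have := sig_abs i d u.
  rewrite ler_norml => /andP[h1 h2]; lra.
by rewrite {2}/gg; case: ifP => _; apply: key.
Qed.

Lemma xi_mkpt (f : 'I_m -> R) z i : xi (mkpt f z) i = f i.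
Proof. by rewrite /xi /mkpt row_mxEl mxE. Qed.
Lemma xn_mkpt (f : 'I_m -> R) z : xn (mkpt f z) = z.
Proof. by rewrite /xn /mkpt row_mxEr mxE eqxx mulr1n. Qed.
Lemma pt_ext (x y : 'rV[R]_(m + 1)) : (forall i, xi x i = xi y i) -> xn x = xn y -> x = y.
Proof.
move=> h1 h2; rewrite -[x]hsubmxK -[y]hsubmxK; congr row_mx; apply/rowP => j; rewrite !mxE.
  exact: h1.
by rewrite [j]ord1; exact: h2.
Qed.
Lemma mkpt_eta (x : 'rV[R]_(m + 1)) : x = mkpt (xi x) (xn x).
Proof. by apply: pt_ext => [i|]; rewrite ?xi_mkpt ?xn_mkpt. Qed.
Lemma mkpt_ext (f f' : 'I_m -> R) z z' : (forall i, f i = f' i) -> z = z' -> mkpt f z = mkpt f' z'.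
Proof. by move=> h ->; apply: pt_ext => [i|]; rewrite ?xi_mkpt ?xn_mkpt. Qed.
Lemma mkpt_inj (f f' : 'I_m -> R) z z' : mkpt f z = mkpt f' z' -> (forall i, f i = f' i) /\ z = z'.
Proof.
move=> e; split => [i|]; first by rewrite -(xi_mkpt f z i) e xi_mkpt.
by rewrite -(xn_mkpt f z) e xn_mkpt.
Qed.
Lemma xi_comb (x y : 'rV[R]_(m + 1)) t s i : xi (t *: x + s *: y) i = t * xi x i + s * xi y i.
Proof. by rewrite /xi !mxE. Qed.
Lemma xn_comb (x y : 'rV[R]_(m + 1)) t s : xn (t *: x + s *: y) = t * xn x + s * xn y.
Proof. by rewrite /xn !mxE. Qed.

Lemma sum_upd (F G : 'I_m -> R) k : (forall j, j != k -> F j = G j) ->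
  \sum_(j < m) F j = \sum_(j < m) G j + (F k - G k).
Proof.
move=> h; rewrite (bigD1 k) //= [X in _ = X + _](bigD1 k) //=.
rewrite (eq_bigr (fun j => G j)); first by ring.
by move=> j; exact: h.
Qed.

Lemma RP_Fd (x : 'rV[R]_(m + 1)) : RP a x <->
  ((forall i, a i - 2^-1 <= xi x i <= a i + 2^-1) /\ (-1 <= xn x <= 1) /\
   (forall d, xn x <= 2^-1 + Fd d (xi x) /\ - 2^-1 - Fd d (xi x) <= xn x)).
Proof. by []. Qed.

Lemma Gf_Fd h : Gf h = Fd (fun i => sel i (h i)) h.
Proof. by apply: eq_bigr => i _; rewrite gg_sel. Qed.
Lemma Gf_le d h : Gf h <= Fd d h.
Proof. by apply: ler_sum => i _; exact: gg_le. Qed.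

Lemma Fd_mkpt d (h : 'I_m -> R) z : Fd d (xi (mkpt h z)) = Fd d h.
Proof. by apply: eq_bigr => i _; rewrite xi_mkpt. Qed.

Lemma RP_h h z : RP a (mkpt h z) <->
  ((forall i, a i - 2^-1 <= h i <= a i + 2^-1) /\ `|z| <= 1 /\ (forall d, `|z| <= 2^-1 + Fd d h)).
Proof.
rewrite RP_Fd xn_mkpt; split.
  move=> [hb [hz hd]]; split; first by move=> i; rewrite -(xi_mkpt h z).
  split; first by rewrite ler_norml.
  move=> d; have [h1 h2] := hd d; rewrite Fd_mkpt in h1 h2; rewrite ler_norml; apply/andP; split; lra.
move=> [hb [hz hd]]; split; first by move=> i; rewrite xi_mkpt.
split; first by rewrite -ler_norml.
move=> d; have := hd d; rewrite Fd_mkpt ler_norml => /andP[h1 h2]; split; lra.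
Qed.

Lemma RP_G h z : RP a (mkpt h z) <->
  ((forall i, a i - 2^-1 <= h i <= a i + 2^-1) /\ `|z| <= 1 /\ `|z| <= 2^-1 + Gf h).
Proof.
rewrite RP_h; split.
  move=> [hb [hz hd]]; do 2 split => //; rewrite Gf_Fd; exact: hd.
move=> [hb [hz hd]]; do 2 split => //; move=> d; have := Gf_le d h; lra.
Qed.

Lemma Dl_pos i : 0 < Dl i.
Proof. have := ha i; case/andP => h1 h2; rewrite /Dl /Delta_; nra. Qed.
Lemma base_in (T : {set 'I_m}) (eps : 'I_m -> bool) (i : 'I_m) : i \in T -> base a T eps i = a i - 2^-1 + (eps i)%:R.
Proof. by move=> h; rewrite /base h. Qed.
Lemma base_out (T : {set 'I_m}) (eps : 'I_m -> bool) (i : 'I_m) : i \notin T -> base a T eps i = 2^-1 - a i.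
Proof. by move=> h; rewrite /base (negbTE h). Qed.
Lemma base_box (T : {set 'I_m}) (eps : 'I_m -> bool) (i : 'I_m) : a i - 2^-1 <= base a T eps i <= a i + 2^-1.
Proof.
have := ha i; case/andP => h1 h2; rewrite /base; case: ifP => _.
  by case: (eps i) => /=; apply/andP; split; lra.
by apply/andP; split; lra.
Qed.
Lemma fd_peak j d : fd j d (2^-1 - a j) = Dl j.
Proof. by rewrite /fd /Dl /Delta_; case: d => /=; field. Qed.
Lemma fd_base_in (T : {set 'I_m}) (eps : 'I_m -> bool) (i : 'I_m) : i \in T -> fd i (eps i) (base a T eps i) = - Dl i.
Proof. by move=> h; rewrite base_in // /fd /Dl /Delta_; case: (eps i) => /=; field. Qed.
Lemma fd_base_out (T : {set 'I_m}) (eps : 'I_m -> bool) (i : 'I_m) d : i \notin T -> fd i d (base a T eps i) = Dl i.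
Proof. by move=> h; rewrite base_out // fd_peak. Qed.
Lemma sel_base (T : {set 'I_m}) (eps : 'I_m -> bool) (i : 'I_m) : i \in T -> sel i (base a T eps i) = eps i.
Proof.
move=> h; rewrite base_in // /sel; have := ha i; case/andP => h1 h2.
case: (eps i) => /=; first by apply/idP; lra.
by apply/negbTE; rewrite -leNgt; lra.
Qed.

Lemma Fd_base (T : {set 'I_m}) (eps : 'I_m -> bool) d : (forall j, j \in T -> d j = eps j) -> Fd d (base a T eps) = KS a T - 2^-1.
Proof.
move=> hd; rewrite /Fd (bigID (fun j => j \in T)) /=.
rewrite (eq_bigr (fun j => - Dl j)); last by move=> j /= hj; rewrite (hd j hj) fd_base_in.
rewrite (eq_bigr (fun j => Dl j)); last by move=> j /= hj; rewrite fd_base_out.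
have eC : \sum_(j in ~: T) Delta_ (a j) = \sum_(j < m | ~~ (j \in T)) Dl j.
  by apply: eq_bigl => j; rewrite in_setC.
rewrite sumrN /KS /DeltaS eC.
rewrite /Dl; lra.
Qed.

Lemma KS_add k (T : {set 'I_m}) : k \notin T -> KS a (k |: T) = KS a T - 2 * Dl k.
Proof.
move=> hk; have e : ~: T = k |: ~: (k |: T).
  by apply/setP => j; rewrite !inE; case: eqP => // ->; rewrite hk.
rewrite /KS /DeltaS e big_setU1 //= ?big_setU1 //= ?inE ?eqxx //; rewrite /Dl; lra.
Qed.

Lemma Fd_upd d (h h' : 'I_m -> R) k : (forall j, j != k -> h' j = h j) ->
  Fd d h' = Fd d h + (fd k (d k) (h' k) - fd k (d k) (h k)).
Proof. by move=> e; apply: sum_upd => j hj; rewrite e. Qed.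
Lemma Gf_upd (h h' : 'I_m -> R) k : (forall j, j != k -> h' j = h j) ->
  Gf h' = Gf h + (gg k (h' k) - gg k (h k)).
Proof. by move=> e; apply: sum_upd => j hj; rewrite e. Qed.

Lemma Fd_agree (T : {set 'I_m}) (eps : 'I_m -> bool) d (h : 'I_m -> R) : (forall j, j \in T -> d j = eps j) ->
  (forall j, j \notin T -> h j = 2^-1 - a j) -> Fd d h = Fd eps h.
Proof.
move=> hd hh; apply: eq_bigr => j _; case: (boolP (j \in T)) => hj; first by rewrite hd.
by rewrite hh // !fd_peak.
Qed.

Lemma comb_ge (p q c t : R) : c <= p -> c <= q -> 0 < t < 1 ->
  c = t * p + (1 - t) * q -> p = c.
Proof.
move=> hp hq /andP[t0 t1] e; apply/eqP; rewrite eq_le hp andbT leNgt; apply/negP => hlt.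
have : 0 < t * (p - c) by apply: mulr_gt0; lra.
have : 0 <= (1 - t) * (q - c) by apply: mulr_ge0; lra.
nra.
Qed.

Lemma sgn_le_norm (s : bool) (u : R) : (-1) ^+ s * u <= `|u|.
Proof. by case: s; rewrite /= ?expr0 ?expr1 ?mul1r ?mulN1r ?ler_norm // ler_normr lexx orbT. Qed.
Lemma norm_sgn (s : bool) (u : R) : `|(-1) ^+ s * u| = `|u|.
Proof. by case: s; rewrite /= ?expr0 ?expr1 ?mul1r ?mulN1r ?normrN. Qed.

Definition agree (h : 'I_m -> R) (z : R) (hy : 'I_m -> R) (zy : R) :=
  [/\ (forall i, h i = a i - 2^-1 -> hy i = a i - 2^-1),
      (forall i, h i = a i + 2^-1 -> hy i = a i + 2^-1),
      (z = 1 -> zy = 1), (z = -1 -> zy = -1) &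
      (forall d (s : bool), (-1) ^+ s * z = 2^-1 + Fd d h -> (-1) ^+ s * zy = 2^-1 + Fd d hy)].

Lemma Fd_aff d t (hy hy' : 'I_m -> R) :
  Fd d (fun i => t * hy i + (1 - t) * hy' i) = t * Fd d hy + (1 - t) * Fd d hy'.
Proof.
rewrite /Fd (eq_bigr (fun i => t * fd i (d i) (hy i) + (1 - t) * fd i (d i) (hy' i))).
  by rewrite big_split /= -!mulr_sumr.
by move=> i _; rewrite fd_aff.
Qed.

Lemma agree_comb t (h hy hy' : 'I_m -> R) z zy zy' : RP a (mkpt hy zy) -> RP a (mkpt hy' zy') ->
  0 < t < 1 -> (forall i, h i = t * hy i + (1 - t) * hy' i) -> z = t * zy + (1 - t) * zy' ->
  agree h z hy zy.
Proof.
move=> /RP_h [b1 [n1 d1]] /RP_h [b2 [n2 d2]] ht eh ez; split.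
- move=> i hi; have /andP[l1 u1] := b1 i; have /andP[l2 u2] := b2 i.
  by apply: (comb_ge l1 l2 ht); rewrite -eh hi.
- move=> i hi; have /andP[l1 u1] := b1 i; have /andP[l2 u2] := b2 i.
  by apply: (comb_le u1 u2 ht); rewrite -eh hi.
- move=> hz; move: n1 n2; rewrite !ler_norml => /andP[_ n1] /andP[_ n2].
  by apply: (comb_le n1 n2 ht); rewrite -ez hz.
- move=> hz; move: n1 n2; rewrite !ler_norml => /andP[n1 _] /andP[n2 _].
  by apply: (comb_ge n1 n2 ht); rewrite -ez hz.
- move=> d s e.
  have p1 : (-1) ^+ s * zy - Fd d hy <= 2^-1.
    have := d1 d; have := sgn_le_norm s zy; lra.
  have p2 : (-1) ^+ s * zy' - Fd d hy' <= 2^-1.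
    have := d2 d; have := sgn_le_norm s zy'; lra.
  have eF : Fd d h = Fd d (fun i => t * hy i + (1 - t) * hy' i).
    by apply: eq_bigr => i _; rewrite eh.
  have := comb_le p1 p2 ht.
  have -> : t * ((-1) ^+ s * zy - Fd d hy) + (1 - t) * ((-1) ^+ s * zy' - Fd d hy') =
           (-1) ^+ s * z - Fd d h by rewrite eF Fd_aff ez; ring.
  move=> H; have := H ltac:(lra); lra.
Qed.

Lemma vertex_by (h : 'I_m -> R) z : RP a (mkpt h z) ->
  (forall hy zy, RP a (mkpt hy zy) -> agree h z hy zy -> (forall i, hy i = h i) /\ zy = z) ->
  is_vertex (RP a) (mkpt h z).
Proof.
move=> hx key; split => // y y' t hy hy' ht e.
rewrite (mkpt_eta y) in hy; rewrite (mkpt_eta y') in hy'.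
have eh : forall i, h i = t * xi y i + (1 - t) * xi y' i.
  by move=> i; rewrite -(xi_mkpt h z i) e xi_comb.
have ez : z = t * xn y + (1 - t) * xn y'.
  by rewrite -(xn_mkpt h z) e xn_comb.
have [k1 k2] := key _ _ hy (agree_comb hy hy' ht eh ez).
have ht' : 0 < 1 - t < 1 by case/andP: ht => ? ?; apply/andP; split; lra.
have eh' : forall i, h i = (1 - t) * xi y' i + (1 - (1 - t)) * xi y i.
  by move=> i; rewrite eh; ring.
have ez' : z = (1 - t) * xn y' + (1 - (1 - t)) * xn y by rewrite ez; ring.
have [k1' k2'] := key _ _ hy' (agree_comb hy' hy ht' eh' ez').
by apply: pt_ext => [i|]; rewrite ?k1 ?k1' ?k2 ?k2'.
Qed.

Lemma pin_out (T : {set 'I_m}) (eps : 'I_m -> bool) (hy : 'I_m -> R) zy (s : bool) c :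
  (forall d, (forall j, j \in T -> d j = eps j) -> (-1) ^+ s * zy = c + Fd d hy) ->
  forall i, i \notin T -> hy i = 2^-1 - a i.
Proof.
move=> H i hi.
pose d1 := fun j => if j == i then false else eps j.
pose d2 := fun j => if j == i then true else eps j.
have a1 : forall j, j \in T -> d1 j = eps j.
  move=> j hj; rewrite /d1; case: eqP => // ej; by move: hj; rewrite ej (negbTE hi).
have a2 : forall j, j \in T -> d2 j = eps j.
  move=> j hj; rewrite /d2; case: eqP => // ej; by move: hj; rewrite ej (negbTE hi).
have e1 := H d1 a1; have e2 := H d2 a2.
have := @sum_upd (fun j => fd j (d1 j) (hy j)) (fun j => fd j (d2 j) (hy j)) i.
rewrite /d1 /d2 eqxx => /(_ ltac:(by move=> j hj; rewrite (negbTE hj))).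
rewrite -/(Fd d1 hy) -/(Fd d2 hy) => E.
have := fd_diff i (hy i); lra.
Qed.

Lemma Gf_base (T : {set 'I_m}) (eps : 'I_m -> bool) : Gf (base a T eps) = KS a T - 2^-1.
Proof. by rewrite Gf_Fd; apply: Fd_base => j hj; rewrite sel_base. Qed.

Lemma gg_base_eps (T : {set 'I_m}) (eps : 'I_m -> bool) j :
  gg j (base a T eps j) = fd j (eps j) (base a T eps j).
Proof. by rewrite gg_sel; case: (boolP (j \in T)) => hj; [rewrite sel_base | rewrite !fd_base_out]. Qed.

Lemma std_vertex (T : {set 'I_m}) (eps : 'I_m -> bool) (s : bool) : 0 <= KS a T <= 1 ->
  is_vertex (RP a) (mkpt (base a T eps) ((-1) ^+ s * KS a T)).
Proof.
move=> /andP[k0 k1]; apply: vertex_by.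
  apply/RP_G; split; first by move=> i; exact: base_box.
  by rewrite norm_sgn Gf_base ger0_norm //; split; lra.
move=> hy zy hR [A1 A2 A3 A4 A5].
have hact : forall d, (forall j, j \in T -> d j = eps j) -> (-1) ^+ s * zy = 2^-1 + Fd d hy.
  move=> d hd; apply: A5; rewrite Fd_base // mulrA sgn2 mul1r; lra.
have hin : forall i, hy i = base a T eps i.
  move=> i; case: (boolP (i \in T)) => hi; last by rewrite base_out //; exact: (pin_out hact hi).
  have := ha i; case/andP => h1 h2.
  rewrite base_in //; case e: (eps i) => /=.
    by rewrite A2 ?base_in ?e //=; lra.
  by rewrite A1 ?base_in ?e //=; lra.
split => //.
have := hact eps (fun j _ => erefl).
have eF : Fd eps hy = Fd eps (base a T eps) by apply: eq_bigr => i _; rewrite hin.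
rewrite eF Fd_base // => E.
have -> : zy = (-1) ^+ s * ((-1) ^+ s * zy) by rewrite mulrA sgn2 mul1r.
by rewrite E; congr (_ * _); lra.
Qed.

Definition modp (T : {set 'I_m}) (eps : 'I_m -> bool) (k : 'I_m) (c : R) : 'I_m -> R :=
  fun i => if i == k then base a T eps i + c else base a T eps i.

Lemma modp_Fd (T : {set 'I_m}) (eps : 'I_m -> bool) (k : 'I_m) (c : R) d : k \in T -> (forall j, j \in T -> d j = eps j) ->
  Fd d (modp T eps k c) = KS a T - 2^-1 + (2 * a k - (eps k)%:R) * c.
Proof.
move=> hk hd; rewrite (@Fd_upd d (base a T eps) (modp T eps k c) k).
  by rewrite (Fd_base hd) /modp eqxx fd_lin (hd k hk); ring.
by move=> j hj; rewrite /modp (negbTE hj).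
Qed.

Lemma modp_RP (T : {set 'I_m}) (eps : 'I_m -> bool) (k : 'I_m) (c : R) z : k \in T ->
  a k - 2^-1 <= base a T eps k + c <= a k + 2^-1 ->
  gg k (base a T eps k + c) = fd k (eps k) (base a T eps k + c) ->
  `|z| <= 1 -> `|z| <= KS a T + (2 * a k - (eps k)%:R) * c ->
  RP a (mkpt (modp T eps k c) z).
Proof.
move=> hk hb hg hz1 hz2; apply/RP_G; split.
  by move=> i; rewrite /modp; case: eqP => [->|_] //; exact: base_box.
split => //.
have -> : Gf (modp T eps k c) = Fd eps (modp T eps k c).
  apply: eq_bigr => j _; rewrite /modp; case: eqP => [->|_]; first exact: hg.
  exact: gg_base_eps.
by rewrite modp_Fd //; lra.
Qed.

Lemma modp_pin (T : {set 'I_m}) (eps : 'I_m -> bool) (k : 'I_m) (c : R) (hy : 'I_m -> R) : (forall j, j != k -> hy j = modp T eps k c j) ->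
  Fd eps hy = Fd eps (modp T eps k c) -> hy k = modp T eps k c k.
Proof.
move=> hj e; move: e; rewrite (@Fd_upd eps (modp T eps k c) hy k) // => e.
have : fd k (eps k) (hy k) = fd k (eps k) (modp T eps k c k) by lra.
rewrite -{1}(subrK (modp T eps k c k) (hy k)) addrC fd_lin => e2.
have : (2 * a k - (eps k)%:R) * (hy k - modp T eps k c k) = 0 by lra.
move/eqP; rewrite mulf_eq0 (negbTE (sig_ne0 _ _)) /= subr_eq0 => /eqP //.
Qed.

Lemma modp_others (T : {set 'I_m}) (eps : 'I_m -> bool) (k : 'I_m) (c : R) z hy zy (s : bool) cc : k \in T -> agree (modp T eps k c) z hy zy ->
  (forall d, (forall j, j \in T -> d j = eps j) -> (-1) ^+ s * zy = cc + Fd d hy) ->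
  forall j, j != k -> hy j = modp T eps k c j.
Proof.
move=> hk [A1 A2 _ _ _] hact j hj; rewrite /modp (negbTE hj).
case: (boolP (j \in T)) => hjT; last by rewrite base_out //; exact: (pin_out hact hjT).
have := ha j; case/andP => h1 h2.
rewrite base_in //; case e: (eps j) => /=.
  by rewrite A2; [lra|]; rewrite /modp (negbTE hj) base_in // e /=; lra.
by rewrite A1; [lra|]; rewrite /modp (negbTE hj) base_in // e /=; lra.
Qed.

Lemma modp_peak (T : {set 'I_m}) (eps : 'I_m -> bool) (k : 'I_m) (c : R) j : k \in T -> j \notin T -> modp T eps k c j = 2^-1 - a j.
Proof.
move=> hk hj; rewrite /modp; case: eqP => [e|_]; last by rewrite base_out.
by move: hj; rewrite e hk.
Qed.

Lemma mid_vertex (T : {set 'I_m}) (eps : 'I_m -> bool) (k : 'I_m) (c : R) : k \in T ->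
  a k - 2^-1 <= base a T eps k + c <= a k + 2^-1 ->
  gg k (base a T eps k + c) = fd k (eps k) (base a T eps k + c) ->
  KS a T + (2 * a k - (eps k)%:R) * c = 0 ->
  is_vertex (RP a) (mkpt (modp T eps k c) 0).
Proof.
move=> hk hb hg hK; apply: vertex_by.
  by apply: modp_RP => //; rewrite normr0 ?hK.
move=> hy zy hR A; have [_ _ _ _ A5] := A.
have hact : forall (s : bool) d, (forall j, j \in T -> d j = eps j) -> (-1) ^+ s * zy = 2^-1 + Fd d hy.
  move=> s d hd; apply: A5; rewrite mulr0 (@Fd_agree T eps) //; last by move=> j hj; exact: modp_peak.
  by rewrite modp_Fd //; lra.
have oth := modp_others hk A (hact false).
have ez : zy = 0.
  have := hact false eps (fun _ _ => erefl); have := hact true eps (fun _ _ => erefl).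
  rewrite /= expr0 expr1 mul1r mulN1r; lra.
split => //; move=> i; case: (eqVneq i k) => [->|hi]; last exact: oth.
apply: modp_pin => //.
have := hact false eps (fun _ _ => erefl); rewrite expr0 mul1r ez modp_Fd //; lra.
Qed.

Lemma trunc_vertex (T : {set 'I_m}) (eps : 'I_m -> bool) (k : 'I_m) (c : R) (s : bool) : k \in T ->
  a k - 2^-1 <= base a T eps k + c <= a k + 2^-1 ->
  gg k (base a T eps k + c) = fd k (eps k) (base a T eps k + c) ->
  KS a T + (2 * a k - (eps k)%:R) * c = 1 ->
  is_vertex (RP a) (mkpt (modp T eps k c) ((-1) ^+ s)).
Proof.
move=> hk hb hg hK; apply: vertex_by.
  by apply: modp_RP => //; rewrite -(mulr1 ((-1) ^+ s)) norm_sgn normr1 ?hK.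
move=> hy zy hR A; have [_ _ A3 A4 A5] := A.
have hact : forall d, (forall j, j \in T -> d j = eps j) -> (-1) ^+ s * zy = 2^-1 + Fd d hy.
  move=> d hd; apply: A5; rewrite sgn2 (@Fd_agree T eps) //; last by move=> j hj; exact: modp_peak.
  by rewrite modp_Fd //; lra.
have oth := modp_others hk A hact.
have ez : zy = (-1) ^+ s.
  by move: A3 A4; case: (s) => /= A3 A4; [rewrite expr1 A4 // expr1 | rewrite expr0 A3 // expr0].
split => //; move=> i; case: (eqVneq i k) => [->|hi]; last exact: oth.
apply: modp_pin => //.
have := hact eps (fun _ _ => erefl); rewrite ez sgn2 modp_Fd //; lra.
Qed.

Lemma r_norm (r : R) : (r = 1 \/ r = -1) -> `|r| = 1.
Proof. by case=> ->; rewrite ?normrN normr1. Qed.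
Lemma r_normM (r v : R) : (r = 1 \/ r = -1) -> `|r * v| = `|v|.
Proof. by move=> hr; rewrite normrM (r_norm hr) mul1r. Qed.

Lemma not_vertex (h : 'I_m -> R) z (dh : 'I_m -> R) dz :
  (forall r : R, (r = 1 \/ r = -1) -> RP a (mkpt (fun i => h i + r * dh i) (z + r * dz))) ->
  ((exists i, dh i != 0) \/ dz != 0) -> ~ is_vertex (RP a) (mkpt h z).
Proof.
move=> H hne [_ V].
have ht : 0 < (2^-1 : R) < 1 by apply/andP; split; lra.
have e := V _ _ (2^-1) (H 1 (or_introl erefl)) (H (-1) (or_intror erefl)) ht.
have e' := e ltac:(apply: pt_ext => [i|]; rewrite ?xi_comb ?xn_comb ?xi_mkpt ?xn_mkpt; lra).
have [e1 e2] := mkpt_inj e'.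
case: hne => [[i hi]|hz].
  by have := e1 i => E; apply: (negP hi); apply/eqP; lra.
by apply: (negP hz); apply/eqP; lra.
Qed.

Lemma perturb_z (h : 'I_m -> R) z : RP a (mkpt h z) -> `|z| < 1 -> `|z| < 2^-1 + Gf h ->
  ~ is_vertex (RP a) (mkpt h z).
Proof.
move=> /RP_G [hb [_ _]] h1 h2.
have [u u0 [u1 u2]] := min_pos (p := 1 - `|z|) (q := 2^-1 + Gf h - `|z|) ltac:(lra) ltac:(lra).
apply: (@not_vertex h z (fun _ => 0) u); last by right; exact: lt0r_neq0.
move=> r hr; apply/RP_G.
have eh : Gf (fun i => h i + r * 0) = Gf h by apply: eq_bigr => i _; rewrite mulr0 addr0.
split; first by move=> i; rewrite mulr0 addr0.
rewrite eh; have := ler_normD z (r * u); rewrite (r_normM u hr) (ger0_norm (ltW u0)).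
by move=> H; split; lra.
Qed.

Lemma perturb_i (h : 'I_m -> R) z i u : RP a (mkpt h z) -> 0 < u ->
  (forall r : R, (r = 1 \/ r = -1) ->
     a i - 2^-1 <= h i + r * u <= a i + 2^-1 /\
     `|z| <= 2^-1 + Gf h + (gg i (h i + r * u) - gg i (h i))) ->
  ~ is_vertex (RP a) (mkpt h z).
Proof.
move=> /RP_G [hb [hz _]] u0 H.
apply: (@not_vertex h z (fun j => if j == i then u else 0) 0); last first.
  by left; exists i; rewrite eqxx gt_eqF.
move=> r hr; have [Hb HG] := H r hr; apply/RP_G; split.
  by move=> j; case: eqP => [->|_] //; rewrite mulr0 addr0.
rewrite mulr0 addr0; split => //.
rewrite (@Gf_upd h _ i); first by rewrite /= eqxx addrA.
by move=> j hj; rewrite (negbTE hj) mulr0 addr0.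
Qed.

Lemma free_lin i t : a i - 2^-1 < t < a i + 2^-1 -> t != 2^-1 - a i ->
  exists2 g, 0 < g & forall v, `|v| <= g ->
    (a i - 2^-1 <= t + v <= a i + 2^-1) /\
    gg i (t + v) = gg i t + (2 * a i - (sel i t)%:R) * v.
Proof.
move=> /andP[t1 t2] tn; have := ha i; case/andP => a1 a2.
case s: (sel i t); move: s; rewrite /sel => s.
- have [g g0 [g1 g2]] := min_pos (p := t - (2^-1 - a i)) (q := a i + 2^-1 - t) ltac:(lra) ltac:(lra).
  exists g => // v; rewrite ler_norml => /andP[v1 v2]; split; first by apply/andP; split; lra.
  by rewrite !gg_piece1 ?fd_lin //; lra.
- have s' : t < 2^-1 - a i by rewrite lt_neqAle tn /= leNgt s.
  have [g g0 [g1 g2]] := min_pos (p := t - (a i - 2^-1)) (q := 2^-1 - a i - t) ltac:(lra) ltac:(lra).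
  exists g => // v; rewrite ler_norml => /andP[v1 v2]; split; first by apply/andP; split; lra.
  by rewrite !gg_piece0 ?fd_lin //; lra.
Qed.

Lemma free_bounds i t : a i - 2^-1 < t < a i + 2^-1 -> t != 2^-1 - a i ->
  - Dl i < fd i (sel i t) t < Dl i.
Proof.
move=> /andP[t1 t2] tn; have := ha i; case/andP => a1 a2.
rewrite /Dl /Delta_; case s: (sel i t); move: s; rewrite /sel => s.
- rewrite fd1; apply/andP; split; nra.
- have s' : t < 2^-1 - a i by rewrite lt_neqAle tn /= leNgt s.
  rewrite fd0; apply/andP; split; nra.
Qed.

Lemma kform i (e : bool) t : t = a i - 2^-1 + e%:R + (Dl i + fd i e t) / (2 * a i - e%:R).
Proof.
have := sig_ne0 i e; have := ha i; case/andP => a1 a2.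
rewrite /Dl /Delta_ /fd; case: e => /= hne; field; rewrite ?hne //; exact: lt0r_neq0.
Qed.

Lemma z_sgn (z : R) : z = (-1) ^+ (z < 0)%R * `|z|.
Proof.
case: (ltrP z 0) => hz.
  by rewrite ltr0_norm // expr1 mulN1r opprK.
by rewrite ger0_norm // expr0 mul1r.
Qed.

Lemma classify (h : 'I_m -> R) z : is_vertex (RP a) (mkpt h z) ->
  (exists (T : {set 'I_m}) (eps : 'I_m -> bool) (s : bool),
     0 <= KS a T <= 1 /\ (forall i, h i = base a T eps i) /\ z = (-1) ^+ s * KS a T) \/
  (exists (T : {set 'I_m}) (eps : 'I_m -> bool) (k : 'I_m),
     k \in T /\ KS a T < 0 < KS a (T :\ k) /\
     (forall i, h i = (if i == k then a k - 2^-1 + (eps k)%:R - KS a T / (2 * a k - (eps k)%:R)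
                       else base a T eps i)) /\ z = 0) \/
  (exists (T : {set 'I_m}) (eps : 'I_m -> bool) (k : 'I_m) (s : bool),
     k \notin T /\ KS a (k |: T) < 1 < KS a T /\
     (forall i, h i = (if i == k then a k - 2^-1 + (eps k)%:R + (1 - KS a (k |: T)) / (2 * a k - (eps k)%:R)
                       else base a T eps i)) /\ z = (-1) ^+ s).
Proof.
move=> V; have [hR _] := V.
have [hb [hz hG]] := (RP_G h z).1 hR.
pose S := [set i | (h i == a i - 2^-1) || (h i == a i + 2^-1)].
pose eps := fun i => sel i (h i).
pose free := fun i => (a i - 2^-1 < h i < a i + 2^-1) && (h i != 2^-1 - a i).
have nf : forall i, ~~ free i -> h i = base a S eps i.
  move=> i hf; have := ha i; case/andP => a1 a2; have /andP[b1 b2] := hb i.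
  rewrite /base inE /eps /sel.
  case: (eqVneq (h i) (a i - 2^-1)) => [e1|n1] /=.
    rewrite e1; have -> : (2^-1 - a i < a i - 2^-1) = false by apply/negbTE; rewrite -leNgt; lra.
    by rewrite mulr0n addr0.
  case: (eqVneq (h i) (a i + 2^-1)) => [e2|n2] /=.
    rewrite e2; have -> : (2^-1 - a i < a i + 2^-1) = true by apply/idP; lra.
    by rewrite mulr1n; lra.
  move: hf; rewrite /free negb_and negbK; case/orP => [H|/eqP -> //]; exfalso.
  move/negP: H; apply; rewrite !lt_neqAle b1 b2 eq_sym n1 n2 //.
have fS : forall i, free i -> i \notin S.
  by move=> i /andP[/andP[l u] _]; rewrite inE (gt_eqF l) (lt_eqF u).
have uniqf : forall i k, free i -> free k -> i = k.
  move=> i k fi fk; case: (eqVneq i k) => // ne; exfalso.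
  move: fi fk => /andP[bi ni] /andP[bk nk].
  have [gi gi0 Hi] := free_lin bi ni; have [gk gk0 Hk] := free_lin bk nk.
  have [u u0 [ui uk]] := min_pos gi0 gk0.
  pose si := 2 * a i - (sel i (h i))%:R; pose sk := 2 * a k - (sel k (h k))%:R.
  pose dh := fun j => if j == i then sk * u else if j == k then - (si * u) else 0.
  apply: (@not_vertex h z dh 0 _ _ V); last first.
    left; exists i; rewrite /dh eqxx; apply: mulf_neq0; [exact: sig_ne0 | exact: lt0r_neq0].
  move=> r hr; apply/RP_G.
  have nu : `|u| = u by rewrite ger0_norm // ltW.
  have [Bi Gi] : (a i - 2^-1 <= h i + r * (sk * u) <= a i + 2^-1) /\ gg i (h i + r * (sk * u)) = gg i (h i) + si * (r * (sk * u)).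
    apply: Hi; rewrite (r_normM _ hr); apply: (le_trans (sig_abs _ _ _)); by rewrite nu.
  have [Bk Gk] : (a k - 2^-1 <= h k + r * - (si * u) <= a k + 2^-1) /\ gg k (h k + r * - (si * u)) = gg k (h k) + sk * (r * - (si * u)).
    apply: Hk; rewrite (r_normM _ hr) normrN; apply: (le_trans (sig_abs _ _ _)); by rewrite nu.
  pose h' := fun j => h j + r * dh j.
  have h'i : h' i = h i + r * (sk * u) by rewrite /h' /dh eqxx.
  have h'k : h' k = h k + r * - (si * u) by rewrite /h' /dh eq_sym (negbTE ne) eqxx.
  have h'o : forall j, j != i -> j != k -> h' j = h j.
    by move=> j nji njk; rewrite /h' /dh (negbTE nji) (negbTE njk) mulr0 addr0.
  split.
    move=> j; rewrite -/(h' j); case: (eqVneq j i) => [->|nji]; first by rewrite h'i.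
    case: (eqVneq j k) => [->|njk]; first by rewrite h'k.
    by rewrite h'o //; exact: hb.
  rewrite mulr0 addr0; split => //.
  pose h1 := fun j => if j == k then h' j else h j.
  have E1 : Gf h' = Gf h1 + (gg i (h' i) - gg i (h1 i)).
    apply: Gf_upd => j nji; rewrite /h1; case: (eqVneq j k) => // njk.
    by rewrite h'o.
  have E2 : Gf h1 = Gf h + (gg k (h1 k) - gg k (h k)).
    by apply: Gf_upd => j njk; rewrite /h1 (negbTE njk).
  have h1i : h1 i = h i by rewrite /h1 (negbTE ne).
  have h1k : h1 k = h' k by rewrite /h1 eqxx.
  have -> : Gf (fun j => h j + r * dh j) = Gf h.
    rewrite -/(Gf h') E1 E2 h1i h1k h'i h'k Gi Gk -/si -/sk /eps; ring.
  by [].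
case: (pickP free) => [k fk | nof]; last first.
  have hbase : forall i, h i = base a S eps i by move=> i; apply: nf; rewrite nof.
  have eG : Gf h = KS a S - 2^-1.
    by rewrite -(Gf_base S eps); apply: eq_bigr => i _; rewrite hbase.
  case: (eqVneq `|z| (KS a S)) => [ez|nez].
    left; exists S, eps, (z < 0)%R; split.
      by rewrite -ez normr_ge0 hz.
    by split => //; rewrite {1}(z_sgn z) ez.
  have lt : `|z| < KS a S by rewrite lt_neqAle nez /=; have := hG; rewrite eG => H; lra.
  exfalso.
  case: (eqVneq `|z| 1) => [z1|nz1]; last first.
    apply: (perturb_z hR _ _ V); last by rewrite eG; lra.
    by rewrite lt_neqAle nz1 hz.
  case: (pickP (fun i => i \notin S)) => [i hi | none]; last first.
    have D0 : DeltaS a (~: S) = 0.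
      by rewrite /DeltaS big_pred0 // => j; rewrite in_setC; exact: none.
    have D1 : 0 <= DeltaS a S by apply: sumr_ge0 => j _; exact: ltW (Dl_pos j).
    move: lt; rewrite /KS D0 z1; lra.
  have := ha i; case/andP => a1 a2.
  have [u1 u10 [u11 u12]] := min_pos (p := 2 * a i) (q := 1 - 2 * a i) ltac:(lra) ltac:(lra).
  have [u u0 [u2 u3]] := min_pos (p := u1) (q := KS a S - 1) u10 ltac:(lra).
  apply: (perturb_i (i := i) hR u0 _ V) => r hr.
  have hi' : h i = 2^-1 - a i by rewrite hbase base_out.
  split; first by rewrite hi'; case: hr => ->; apply/andP; split; lra.
  have := gg_lip i (h i) (r * u); rewrite (r_normM _ hr) ger0_norm ?(ltW u0) // => H.
  rewrite eG; lra.
have oth : forall j, j != k -> h j = base a S eps j.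
  move=> j hj; apply: nf; apply/negP => fj; move: hj; by rewrite (uniqf _ _ fj fk) eqxx.
have kS := fS k fk.
move: (fk) => /andP[bk nk].
have [bl bu] := andP (free_bounds bk nk).
have eG : Gf h = KS a S - 2^-1 + fd k (eps k) (h k) - Dl k.
  have eF : Fd eps h = Fd eps (base a S eps) + (fd k (eps k) (h k) - fd k (eps k) (base a S eps k)).
    exact: Fd_upd oth.
  rewrite Gf_Fd -/(Fd eps h) eF (Fd_base (T := S) (eps := eps) (d := eps)) // fd_base_out //; ring.
have [g g0 Hg] := free_lin bk nk.
have ha' := ha k; case/andP: ha' => a1 a2.
case: (eqVneq `|z| (2^-1 + Gf h)) => [ez|nez].
  case: (eqVneq (2^-1 + Gf h) 1) => [c1|nc1].
    right; right; exists S, eps, k, (z < 0)%R; split => //.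
    split; first by rewrite KS_add //; lra.
    split; last by rewrite {1}(z_sgn z) ez c1 mulr1.
    move=> i; case: eqP => [->|/eqP ne]; last exact: oth.
    rewrite {1}(kform k (eps k) (h k)); congr (_ + _ / _).
    rewrite KS_add //; lra.
  case: (eqVneq (2^-1 + Gf h) 0) => [c0|nc0].
    right; left; exists (k |: S), eps, k; split; first exact: setU11.
    split; first by rewrite KS_add // setU1K //; apply/andP; split; lra.
    split; last by apply/eqP; rewrite -normr_eq0 ez c0.
    move=> i; case: eqP => [->|/eqP ne].
      rewrite {1}(kform k (eps k) (h k)) (_ : Dl k + fd k (eps k) (h k) = - KS a (k |: S)) ?mulNr //.
      rewrite KS_add //; lra.
    by rewrite oth // /base in_setU1 (negbTE ne).
  exfalso.
  have cpos : 0 < 2^-1 + Gf h by rewrite lt_neqAle eq_sym nc0 -ez normr_ge0.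
  have c1 : 2^-1 + Gf h < 1 by rewrite lt_neqAle nc1 -ez hz.
  have [u1 u10 [u11 u12]] := min_pos (p := 2^-1 + Gf h) (q := 1 - (2^-1 + Gf h)) cpos ltac:(lra).
  have [u u0 [u2 u3]] := min_pos (p := u1) (q := g) u10 g0.
  set c := 2^-1 + Gf h in ez cpos c1 u11 u12 nc0 nc1.
  pose sg := 2 * a k - (eps k)%:R.
  apply: (@not_vertex h z (fun j => if j == k then u else 0) (z / c * sg * u) _ _ V); last first.
    by left; exists k; rewrite eqxx; exact: lt0r_neq0.
  move=> r hr.
  have nu : `|r * u| = u by rewrite (r_normM _ hr) ger0_norm // ltW.
  have [Bk Gk] := Hg (r * u) ltac:(by rewrite nu).
  have /andP[sl su] : - u <= sg * (r * u) <= u.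
    by have := sig_abs k (eps k) (r * u); rewrite nu ler_norml.
  apply/RP_G; split.
    by move=> j; case: eqP => [->|_] //; rewrite mulr0 addr0.
  have eG' : Gf (fun j => h j + r * (if j == k then u else 0)) = Gf h + sg * (r * u).
    rewrite (@Gf_upd h _ k) /=; last by move=> j hj; rewrite (negbTE hj) mulr0 addr0.
    by rewrite eqxx Gk; rewrite /sg /eps; ring.
  rewrite eG'.
  have -> : z + r * (z / c * sg * u) = z / c * (c + sg * (r * u)).
    by field; apply: lt0r_neq0.
  have nzc : `|z / c| = 1 by rewrite normrM normfV ez (gtr0_norm cpos) divff // lt0r_neq0.
  rewrite normrM nzc mul1r ger0_norm; last by lra.
  have cdef : c = 2^-1 + Gf h by [].
  by split; lra.
have lt : `|z| < 2^-1 + Gf h by rewrite lt_neqAle nez hG.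
exfalso.
case: (eqVneq `|z| 1) => [z1|nz1]; last first.
  apply: (perturb_z hR _ lt V); by rewrite lt_neqAle nz1 hz.
have [u u0 [u2 u3]] := min_pos (p := g) (q := 2^-1 + Gf h - 1) g0 ltac:(lra).
apply: (perturb_i (i := k) hR u0 _ V) => r hr.
have nu : `|r * u| = u by rewrite (r_normM _ hr) ger0_norm // ltW.
have [Bk Gk] := Hg (r * u) ltac:(by rewrite nu).
split => //; rewrite Gk.
have := sig_abs k (sel k (h k)) (r * u); rewrite nu ler_norml => /andP[H1 _].
lra.
Qed.

Lemma mid_ok (T : {set 'I_m}) (eps : 'I_m -> bool) k : k \in T -> KS a T < 0 < KS a (T :\ k) ->
  [/\ a k - 2^-1 <= base a T eps k + - (KS a T / (2 * a k - (eps k)%:R)) <= a k + 2^-1,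
      gg k (base a T eps k + - (KS a T / (2 * a k - (eps k)%:R))) =
        fd k (eps k) (base a T eps k + - (KS a T / (2 * a k - (eps k)%:R))) &
      KS a T + (2 * a k - (eps k)%:R) * - (KS a T / (2 * a k - (eps k)%:R)) = 0].
Proof.
move=> hk /andP[K1 K2].
have hK : KS a T = KS a (T :\ k) - 2 * Dl k.
  by rewrite -{1}(setD1K hk) KS_add // setD11.
have := ha k; case/andP => a1 a2.
have ne := sig_ne0 k (eps k).
have qe : KS a T / (2 * a k - (eps k)%:R) * (2 * a k - (eps k)%:R) = KS a T by rewrite divfK.
move: qe ne; rewrite base_in //.
set q := KS a T / _; move: hK K1 K2; rewrite /Dl /Delta_.
set K := KS a T; set K0 := KS a (T :\ k).
case: (eps k) => /= hK K1 K2 qe ne.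
- rewrite mulr1n in qe ne *.
  have q0 : 0 < q by nra.
  have q1 : q <= 2 * a k by nra.
  split; first by apply/andP; split; lra.
    by rewrite gg_piece1 //; lra.
  by rewrite mulrN (mulrC _ q) qe; lra.
- rewrite mulr0n subr0 in qe ne *.
  have q0 : q < 0 by nra.
  have q1 : - q <= 1 - 2 * a k by nra.
  split; first by apply/andP; split; lra.
    by rewrite gg_piece0 //; lra.
  by rewrite mulrN (mulrC _ q) qe; lra.
Qed.

Lemma trunc_ok (S : {set 'I_m}) (eps : 'I_m -> bool) k : k \notin S -> KS a (k |: S) < 1 < KS a S ->
  [/\ a k - 2^-1 <= base a (k |: S) eps k + (1 - KS a (k |: S)) / (2 * a k - (eps k)%:R) <= a k + 2^-1,
      gg k (base a (k |: S) eps k + (1 - KS a (k |: S)) / (2 * a k - (eps k)%:R)) =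
        fd k (eps k) (base a (k |: S) eps k + (1 - KS a (k |: S)) / (2 * a k - (eps k)%:R)) &
      KS a (k |: S) + (2 * a k - (eps k)%:R) * ((1 - KS a (k |: S)) / (2 * a k - (eps k)%:R)) = 1].
Proof.
move=> hk /andP[K1 K2].
have hK := KS_add hk.
have := ha k; case/andP => a1 a2.
have ne := sig_ne0 k (eps k).
have qe : (1 - KS a (k |: S)) / (2 * a k - (eps k)%:R) * (2 * a k - (eps k)%:R) = 1 - KS a (k |: S) by rewrite divfK.
move: qe ne; rewrite base_in ?setU11 //.
set q := (1 - KS a (k |: S)) / _; move: hK K1 K2; rewrite /Dl /Delta_.
set K := KS a (k |: S); set K0 := KS a S.
case: (eps k) => /= hK K1 K2 qe ne.
- rewrite mulr1n in qe ne *.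
  have q0 : q < 0 by nra.
  have q1 : - q <= 2 * a k by nra.
  split; first by apply/andP; split; lra.
    by rewrite gg_piece1 //; lra.
  by rewrite (mulrC _ q) qe; lra.
- rewrite mulr0n subr0 in qe ne *.
  have q0 : 0 < q by nra.
  have q1 : q <= 1 - 2 * a k by nra.
  split; first by apply/andP; split; lra.
    by rewrite gg_piece0 //; lra.
  by rewrite (mulrC _ q) qe; lra.
Qed.

End Poly.

Theorem theorem4p2 (R : realFieldType) (m : nat) (hm : (1 <= m)%N) (a : 'I_m -> R)
  (ha : forall i : 'I_m, 0 < a i < 2^-1) (x : 'rV[R]_(m + 1)) :
  is_vertex (RP a) x <->
  (standard_vertex a x \/ middle_vertex a x \/ truncating_vertex a x).
Proof.
rewrite (mkpt_eta x); move: (xi x) (xn x) => h z.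
split.
- move=> V; case: (classify ha V) =>
    [[T [eps [s [hK [hh ez]]]]] | [[T [eps [k [hk [hK [hh ez]]]]]] | [T [eps [k [s [hk [hK [hh ez]]]]]]]]].
  + by left; exists T, eps, s; split => //; apply: mkpt_ext.
  + by right; left; exists T, eps, k; do 2 split => //; apply: mkpt_ext.
  + by right; right; exists T, eps, k, s; do 2 split => //; apply: mkpt_ext.
- case => [[T [eps [s [hK ->]]]] | [[T [eps [k [hk [hK ->]]]]] | [T [eps [k [s [hk [hK ->]]]]]]]].
  + exact: std_vertex.
  + have [B G E] := mid_ok ha eps hk hK.
    rewrite (@mkpt_ext _ _ _ (modp a T eps k (- (KS a T / (2 * a k - (eps k)%:R)))) 0 0) //.
      exact: mid_vertex.
    move=> i; rewrite /modp; case: eqP => [->|//]; by rewrite base_in.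
  + have [B G E] := trunc_ok ha eps hk hK.
    rewrite (@mkpt_ext _ _ _ (modp a (k |: T) eps k ((1 - KS a (k |: T)) / (2 * a k - (eps k)%:R))) ((-1) ^+ s) ((-1) ^+ s)) //.
      by apply: trunc_vertex => //; exact: setU11.
    move=> i; rewrite /modp; case: eqP => [->|/eqP ne]; first by rewrite base_in ?setU11.
    by rewrite /base in_setU1 (negbTE ne).
Qed.
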